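(* Let $(\mathcal V,\mathcal W,\lambda)$ be a FTvN system where $\mathcal V$ is a Hilbert space, and let $C$ denote its center. Then: (a) $\mathcal V=C+C^\perp$. (b) $(C,\mathcal W,\lambda|_C)$ is a FTvN system whose center is $C$ (so any two elements in this system commute). (c) $(C^\perp,\mathcal W,\lambda|_{C^\perp})$ is a FTvN system whose center is $\{0\}$.
   Context: A Fan-Theobald-von Neumann (FTvN) system is a triple $(\mathcal V,\mathcal W,\lambda)$ where $\mathcal V,\mathcal W$ are real inner product spaces and $\lambda:\mathcal V\to\mathcal W$ is a map such that: (A1) $\|\lambda(x)\|=\|x\|$ for all $x$; (A2) $\langle x,y\rangle\le\langle\lambda(x),\lambda(y)\rangle$ for all $x,y$; (A3) for every $c\in\mathcal V$ and $q\in\lambda(\mathcal V)$ there exists $x$ with $\lambda(x)=q$ and $\langle c,x\rangle=\langle\lambda(c),\lambda(x)\rangle$. Elements $x,y$ commute if $\langle x,y\rangle=\langle\lambda(x),\lambda(y)\rangle$; the center of a FTvN system is the set of elements commuting with every element of the underlying space. Subspaces carry the restricted inner product. *)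

(* Defs.v *)
From mathcomp Require Import all_boot all_order all_algebra.
From mathcomp Require Import reals.
Set Implicit Arguments. Unset Strict Implicit. Unset Printing Implicit Defensive.
Import Order.TTheory GRing.Theory Num.Theory.
Local Open Scope ring_scope.

Section FTvN.
Variable R : realType.

Definition is_inner_product (V : lmodType R) (ip : V -> V -> R) : Prop :=
  [/\ (forall x y, ip x y = ip y x),
      (forall a x y z, ip (a *: x + y) z = a * ip x z + ip y z),
      (forall x, 0 <= ip x x) &
      (forall x, ip x x = 0 -> x = 0)].

Definition ipnorm (V : lmodType R) (ip : V -> V -> R) (x : V) : R :=
  Num.sqrt (ip x x).

Definition ip_complete (V : lmodType R) (ip : V -> V -> R) : Prop :=
  forall u : nat -> V,
    (forall e : R, 0 < e -> exists N, forall m n, (N <= m)%N -> (N <= n)%N ->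
        ipnorm ip (u m - u n) < e) ->
    exists l : V, forall e : R, 0 < e -> exists N, forall n, (N <= n)%N ->
        ipnorm ip (u n - l) < e.

Definition is_hilbert (V : lmodType R) (ip : V -> V -> R) : Prop :=
  is_inner_product ip /\ ip_complete ip.

Definition is_subspace (V : lmodType R) (S : V -> Prop) : Prop :=
  [/\ S 0, (forall x y, S x -> S y -> S (x + y)) &
      (forall a x, S x -> S (a *: x))].

(* Axioms (A1)-(A3) for the triple (S, W, lam|_S), S carrying the
   restricted inner product. *)
Definition FTvN_axioms (V W : lmodType R) (ipV : V -> V -> R) (ipW : W -> W -> R)
    (lam : V -> W) (S : V -> Prop) : Prop :=
  [/\ (forall x, S x -> ipnorm ipW (lam x) = ipnorm ipV x),
      (forall x y, S x -> S y -> ipV x y <= ipW (lam x) (lam y)) &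
      (forall c y, S c -> S y ->
          exists x, [/\ S x, lam x = lam y & ipV c x = ipW (lam c) (lam x)])].

Definition FTvN_system (V W : lmodType R) (ipV : V -> V -> R) (ipW : W -> W -> R)
    (lam : V -> W) : Prop :=
  [/\ is_inner_product ipV, is_inner_product ipW &
      FTvN_axioms ipV ipW lam (fun _ => True)].

Definition FTvN_subsystem (V W : lmodType R) (ipV : V -> V -> R) (ipW : W -> W -> R)
    (lam : V -> W) (S : V -> Prop) : Prop :=
  [/\ is_inner_product ipV, is_inner_product ipW, is_subspace S &
      FTvN_axioms ipV ipW lam S].

Definition commute_ftvn (V W : lmodType R) (ipV : V -> V -> R) (ipW : W -> W -> R)
    (lam : V -> W) (x y : V) : Prop :=
  ipV x y = ipW (lam x) (lam y).

Definition center_on (V W : lmodType R) (ipV : V -> V -> R) (ipW : W -> W -> R)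
    (lam : V -> W) (S : V -> Prop) (x : V) : Prop :=
  S x /\ forall y, S y -> commute_ftvn ipV ipW lam x y.

Definition center (V W : lmodType R) (ipV : V -> V -> R) (ipW : W -> W -> R)
    (lam : V -> W) : V -> Prop :=
  center_on ipV ipW lam (fun _ => True).

Definition orth (V : lmodType R) (ip : V -> V -> R) (S : V -> Prop) (x : V) : Prop :=
  forall c, S c -> ip x c = 0.

End FTvN.

(* Main.v *)
Require Import Defs.
From mathcomp Require Import all_boot all_order all_algebra.
From mathcomp Require Import reals.
From mathcomp Require Import classical_sets.
From mathcomp Require Import ring lra.
From Stdlib Require Import ClassicalEpsilon.
Import Order.TTheory GRing.Theory Num.Theory.
Local Open Scope ring_scope.

Module Aux.
Set Implicit Arguments. Unset Strict Implicit.
Section IP.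
Variables (R : realType) (V : lmodType R) (ip : V -> V -> R).
Hypothesis H : is_inner_product ip.

Lemma ipC x y : ip x y = ip y x.
Proof. by case: H => h _ _ _; apply: h. Qed.
Lemma ip_ge0 x : 0 <= ip x x.
Proof. by case: H => _ _ h _; apply: h. Qed.
Lemma ip_eq0 x : ip x x = 0 -> x = 0.
Proof. by case: H => _ _ _; apply. Qed.
Lemma ipL a x y z : ip (a *: x + y) z = a * ip x z + ip y z.
Proof. by case: H => _ h _ _; apply: h. Qed.
Lemma ip0l z : ip 0 z = 0.
Proof. have := ipL 1 0 0 z. rewrite scale1r addr0 mul1r. lra. Qed.
Lemma ipDl x y z : ip (x + y) z = ip x z + ip y z.
Proof. by rewrite -{1}[x]scale1r ipL mul1r. Qed.
Lemma ipZl a x z : ip (a *: x) z = a * ip x z.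
Proof. by rewrite -[a *: x]addr0 ipL ip0l addr0. Qed.
Lemma ipNl x z : ip (- x) z = - ip x z.
Proof. by rewrite -scaleN1r ipZl mulN1r. Qed.
Lemma ipDr x y z : ip z (x + y) = ip z x + ip z y.
Proof. by rewrite ipC ipDl !(ipC z). Qed.
Lemma ipZr a x z : ip z (a *: x) = a * ip z x.
Proof. by rewrite ipC ipZl (ipC z). Qed.
Lemma ipNr x z : ip z (- x) = - ip z x.
Proof. by rewrite ipC ipNl (ipC z). Qed.
Lemma ip0r z : ip z 0 = 0.
Proof. by rewrite ipC ip0l. Qed.

Lemma ipCS x y : ip x y ^+ 2 <= ip x x * ip y y.
Proof.
have [a0|an0] := eqVneq (ip x x) 0.
  by rewrite a0 mul0r (ip_eq0 a0) ip0l expr0n.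
have apos : 0 < ip x x by rewrite lt_neqAle eq_sym an0 ip_ge0.
set t := - (ip x y) / ip x x.
have ht : t * ip x x = - ip x y by rewrite /t mulrAC -mulrA divff // mulr1.
have := ip_ge0 (t *: x + y).
rewrite !(ipDl, ipDr, ipZl, ipZr) (ipC y x).
have := ip_ge0 y. nra.
Qed.

Lemma ipn_ge0 x : 0 <= ipnorm ip x.
Proof. exact: sqrtr_ge0. Qed.
Lemma ipn_sqr x : ipnorm ip x ^+ 2 = ip x x.
Proof. by rewrite sqr_sqrtr // ip_ge0. Qed.

Lemma ipCSn x y : `|ip x y| <= ipnorm ip x * ipnorm ip y.
Proof.
rewrite /ipnorm -sqrtrM ?ip_ge0 // -sqrtr_sqr ler_sqrt; last first.
  by rewrite mulr_ge0 ?ip_ge0.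
exact: ipCS.
Qed.

Lemma ipCSn' x y : ip x y <= ipnorm ip x * ipnorm ip y.
Proof. exact: le_trans (ler_norm _) (ipCSn x y). Qed.

Lemma ipn_tri x y : ipnorm ip (x + y) <= ipnorm ip x + ipnorm ip y.
Proof.
rewrite {1}/ipnorm -(ger0_norm (addr_ge0 (ipn_ge0 x) (ipn_ge0 y))) -sqrtr_sqr ler_sqrt ?sqr_ge0 //.
rewrite !(ipDl, ipDr) sqrrD !ipn_sqr (ipC y x).
have := ipCSn' x y. lra.
Qed.

Lemma ipnN x : ipnorm ip (- x) = ipnorm ip x.
Proof. by rewrite /ipnorm ipNl ipNr opprK. Qed.

Lemma ipn_lt x e : 0 < e -> (ipnorm ip x < e) = (ip x x < e ^+ 2).
Proof. move=> e0; by rewrite /ipnorm -(ltr_sqrt (ip x x)) ?exprn_gt0 // sqrtr_sqr gtr0_norm. Qed.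

Lemma ip_sub_sc w t c : ip (w - t *: c) (w - t *: c) = ip w w - 2 * t * ip w c + t ^+ 2 * ip c c.
Proof.
rewrite !(ipDl, ipDr, ipNl, ipNr, ipZl, ipZr) (ipC c w). lra.
Qed.

End IP.

Section F.
Variables (R : realType) (V W : lmodType R) (p : V -> V -> R) (q : W -> W -> R) (lam : V -> W).
Hypotheses (HV : is_inner_product p) (HW : is_inner_product q).
Hypothesis A1 : forall x, ipnorm q (lam x) = ipnorm p x.
Hypothesis A2 : forall x y, p x y <= q (lam x) (lam y).

Lemma lamsq x : q (lam x) (lam x) = p x x.
Proof. by rewrite -(ipn_sqr HW) -(ipn_sqr HV) A1. Qed.

Lemma lam0 : lam 0 = 0.
Proof. by apply: (ip_eq0 HW); rewrite lamsq (ip0l HV). Qed.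

Ltac ex := rewrite ?(ipDl HV, ipDr HV, ipNl HV, ipNr HV, ipZl HV, ipZr HV,
   ipDl HW, ipDr HW, ipNl HW, ipNr HW, ipZl HW, ipZr HW).

Lemma lip x y : q (lam x - lam y) (lam x - lam y) <= p (x - y) (x - y).
Proof.
ex. rewrite !lamsq (ipC HV y x) (ipC HW (lam y)). have := A2 x y. lra.
Qed.

Lemma lamD c y : p c y = q (lam c) (lam y) -> lam (c + y) = lam c + lam y.
Proof.
move=> cy; apply/eqP; rewrite -subr_eq0; apply/eqP; apply: (ip_eq0 HW).
apply/eqP; rewrite eq_le (ip_ge0 HW) andbT.
have h1 := lamsq (c + y). have h2 := A2 (c + y) c. have h3 := A2 (c + y) y.
move: h1 h2 h3; ex.
rewrite !lamsq !(ipC HW (lam c) (lam (c + y))) !(ipC HW (lam y) (lam (c + y))).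
rewrite (ipC HW (lam y) (lam c)) (ipC HV y c). lra.
Qed.

Definition Cn x := forall y, p x y = q (lam x) (lam y).

Lemma lamZ c a : Cn c -> lam (a *: c) = a *: lam c.
Proof.
move=> hc; apply/eqP; rewrite -subr_eq0; apply/eqP; apply: (ip_eq0 HW).
have h := hc (a *: c). move: h; ex.
rewrite !lamsq (ipC HW (lam c) (lam (a *: c))) => h. ex. rewrite -h. lra.
Qed.

Lemma Cn0 : Cn 0.
Proof. by move=> y; rewrite lam0 (ip0l HV) (ip0l HW). Qed.

Lemma CnD c d : Cn c -> Cn d -> Cn (c + d).
Proof. move=> hc hd y; rewrite lamD; last exact: hc. by rewrite (ipDl HV) (ipDl HW) hc hd. Qed.

Lemma CnZ a c : Cn c -> Cn (a *: c).
Proof. move=> hc y; by rewrite lamZ // (ipZl HV) (ipZl HW) hc. Qed.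

End F.

Lemma inv_le (R : realType) k n : (k <= n)%N -> n.+1%:R^-1 <= k.+1%:R^-1 :> R.
Proof. by move=> kn; rewrite lef_pV2 ?posrE ?ltr0Sn // ler_nat ltnS. Qed.

Lemma inv_gt0 (R : realType) n : 0 < n.+1%:R^-1 :> R.
Proof. by rewrite invr_gt0 ltr0Sn. Qed.

Section P.
Variables (R : realType) (V : lmodType R) (p : V -> V -> R).
Hypotheses (HV : is_inner_product p) (HC : ip_complete p).
Variable C : V -> Prop.
Hypotheses (C0 : C 0) (CD : forall x y, C x -> C y -> C (x + y))
  (CZ : forall a x, C x -> C (a *: x)).
Hypothesis Ccl : forall l, (forall e, 0 < e -> exists c, C c /\ ipnorm p (c - l) < e) -> C l.

Ltac ex := rewrite ?(ipDl HV, ipDr HV, ipNl HV, ipNr HV, ipZl HV, ipZr HV).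

Local Notation N := (ipnorm p).

Lemma proj v : exists c d, [/\ C c, orth p C d & v = c + d].
Proof.
pose E := fun r => exists c, C c /\ r = N (v - c).
pose d := inf E.
have hinf : has_inf E.
  split; first by exists (N (v - 0)); exists 0.
  by exists 0 => r [c [_ ->]]; apply: ipn_ge0.
have dlb c : C c -> d <= N (v - c).
  by move=> Cc; apply: (ge_inf hinf.2); exists c.
have d0 : 0 <= d.
  by apply: lb_le_inf; [exact: hinf.1 | move=> r [c [_ ->]]; apply: ipn_ge0].
have adh n : exists c, C c /\ N (v - c) < d + n.+1%:R^-1.
  have [r [c [Cc ->]] lt] := inf_adherent (inv_gt0 R n) hinf.
  by exists c.
pose cs n := proj1_sig (constructive_indefinite_description _ (adh n)).
have csC n : C (cs n) by rewrite /cs; case: constructive_indefinite_description => ? [].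
have csN n : N (v - cs n) < d + n.+1%:R^-1.
  by rewrite /cs; case: constructive_indefinite_description => ? [].
have sqb x e : N x < e -> p x x <= e ^+ 2.
  move=> lt; rewrite -(ipn_sqr HV); have := ipn_ge0 p x; nra.
have ile1 n : n.+1%:R^-1 <= 1 :> R by have := inv_le R (leq0n n); rewrite invr1.
have par n m : p (cs n - cs m) (cs n - cs m) <=
    (4 * d + 2) * (n.+1%:R^-1 + m.+1%:R^-1).
  pose mid := 2^-1 *: (cs n + cs m).
  have Cm : C mid by apply/CZ/CD.
  have hm := dlb mid Cm.
  have s1 := sqb _ _ (csN n). have s2 := sqb _ _ (csN m).
  have s3 : d ^+ 2 <= p (v - mid) (v - mid).
    by rewrite -(ipn_sqr HV); have := d0; nra.
  have id : p (cs n - cs m) (cs n - cs m) = 2 * p (v - cs n) (v - cs n)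
      + 2 * p (v - cs m) (v - cs m) - 4 * p (v - mid) (v - mid).
    rewrite /mid; ex.
    rewrite (ipC HV (cs m) (cs n)) (ipC HV (cs n) v) (ipC HV (cs m) v).
    lra.
  rewrite id.
  have := ile1 n; have := ile1 m; have := inv_gt0 R n; have := inv_gt0 R m.
  move: s1 s2 s3. set a := n.+1%:R^-1. set b := m.+1%:R^-1. nra.
have cau : forall e, 0 < e -> exists K, forall m n, (K <= m)%N -> (K <= n)%N ->
    N (cs m - cs n) < e.
  move=> e e0.
  have h84 : 0 < 8 * d + 4 by lra.
  pose x := e ^+ 2 / (8 * d + 4).
  have x0 : 0 < x by rewrite /x divr_gt0 // exprn_gt0.
  have hx : (8 * d + 4) * x = e ^+ 2 by rewrite /x mulrC divfK // gt_eqF.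
  have [k hk] := ltr_add_invr x0; rewrite add0r in hk.
  have {}hk : k.+1%:R^-1 < x by exact: hk.
  clearbody x.
  exists k => m n km kn; rewrite (ipn_lt _ _ e0).
  apply: le_lt_trans (par m n) _.
  have := inv_le R km; have := inv_le R kn.
  set a := m.+1%:R^-1; set b := n.+1%:R^-1; move=> h1 h2.
  clearbody a b; move: (k.+1%:R^-1 : R) hk h1 h2 => ik hk h1 h2.
  have hab : 0 < 2 * x - (a + b) by lra.
  have h42 : 0 < 4 * d + 2 by lra.
  have := mulr_gt0 h42 hab. lra.
have [l hl] := HC cau.
have Cl : C l.
  apply: Ccl => e e0; have [K hK] := hl e e0; exists (cs K); split => //.
  exact: hK.
have Nvl : N (v - l) <= d.
  apply/ler_addgt0Pr => eta eta0.
  have eta2 : 0 < eta / 2 by rewrite divr_gt0.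
  have [k hk] := ltr_add_invr eta2; rewrite add0r in hk.
  have {}hk : k.+1%:R^-1 < eta / 2 by exact: hk.
  have [K hK] := hl _ eta2.
  pose n := maxn k K.
  have h1 := hK n (leq_maxr k K).
  have h2 := inv_le R (leq_maxl k K).
  have h3 := csN n.
  have eq : v - l = (v - cs n) + (cs n - l) by rewrite addrA subrK.
  have h4 := ipn_tri HV (v - cs n) (cs n - l). rewrite -eq in h4.
  move: h1 h2 h3 h4 hk; rewrite -/n.
  move: (n.+1%:R^-1 : R) (k.+1%:R^-1 : R) => a b. lra.
exists l, (v - l); split => //; last by rewrite addrC subrK.
move=> c Cc.
set w := v - l.
set b := p w c. set a := p c c.
have a0 : 0 <= a by apply: ip_ge0.
pose t := b / (a + 1).
have ht : t * (a + 1) = b by rewrite /t divfK // gt_eqF //; lra.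
have hle : p w w <= p (w - t *: c) (w - t *: c).
  have h := dlb _ (CD Cl (CZ t Cc)).
  have eq : v - (l + t *: c) = w - t *: c by rewrite /w opprD addrA.
  rewrite eq in h.
  rewrite -!(ipn_sqr HV).
  have := ipn_ge0 p w; have := ipn_ge0 p (w - t *: c). nra.
rewrite (ip_sub_sc HV) -/a -/b in hle.
clearbody t.
have ht2 : t ^+ 2 * (a + 2) <= 0 by nra.
have tz : t = 0.
  have : t ^+ 2 <= 0.
    have : 0 <= t ^+ 2 by apply: sqr_ge0.
    nra.
  move=> h; apply/eqP; rewrite -sqrf_eq0 eq_le h sqr_ge0 //.
by rewrite -ht tz mul0r.
Qed.
End P.

End Aux.
Import Aux.

Theorem theorem6p6 (R : realType) (V W : lmodType R)
    (ipV : V -> V -> R) (ipW : W -> W -> R) (lam : V -> W) :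
  FTvN_system ipV ipW lam ->
  is_hilbert ipV ->
  let C := center ipV ipW lam in
  [/\ (forall v : V, exists c d, [/\ C c, orth ipV C d & v = c + d]),
      FTvN_subsystem ipV ipW lam C /\
        (forall x, center_on ipV ipW lam C x <-> C x) &
      FTvN_subsystem ipV ipW lam (orth ipV C) /\
        (forall x, center_on ipV ipW lam (orth ipV C) x <-> x = 0)].
Proof.
move=> [HV HW [A1' A2' A3']] [_ Hc] C.
have A1 x : ipnorm ipW (lam x) = ipnorm ipV x by exact: A1'.
have A2 x y : ipV x y <= ipW (lam x) (lam y) by exact: A2'.
have CC x : C x <-> Cn ipV ipW lam x.
  split; first by move=> [_ h] y; apply: h.
  by move=> h; split => // y _; apply: h.
have C0 : C 0 by apply/CC/(Cn0 HV HW A1).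
have CD x y : C x -> C y -> C (x + y).
  by move=> /CC hx /CC hy; apply/CC/(CnD HV HW A1 A2).
have CZ a x : C x -> C (a *: x).
  by move=> /CC hx; apply/CC/(CnZ HV HW A1).
have lipn x y : ipnorm ipW (lam x - lam y) <= ipnorm ipV (x - y).
  by rewrite /ipnorm ler_sqrt ?(ip_ge0 HV) // (lip HV HW A1 A2).
have Ccl l : (forall e, 0 < e -> exists c, C c /\ ipnorm ipV (c - l) < e) -> C l.
  move=> hl; apply/CC => y; apply/eqP; rewrite eq_le A2 andTb.
  apply/ler_addgt0Pr => eta eta0.
  set Y := ipnorm ipV y.
  have Y0 : 0 <= Y by apply: ipn_ge0.
  have e0 : 0 < eta / (2 * Y + 1) by rewrite divr_gt0 //; lra.
  have [c [/CC Cc hc]] := hl _ e0.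
  have he : eta / (2 * Y + 1) * (2 * Y + 1) = eta by rewrite divfK // gt_eqF //; lra.
  move: (eta / (2 * Y + 1)) e0 he hc => e e0 he hc.
  have eq1 : lam l = lam c + (lam l - lam c) by rewrite addrC subrK.
  have eq2 : ipV l y = ipV c y + ipV (l - c) y by rewrite -(ipDl HV) addrC subrK.
  rewrite eq1 (ipDl HW) -(Cc y) eq2.
  have h1 := ipCSn' HW (lam l - lam c) (lam y).
  have h2 := ipCSn' HV (- (l - c)) y. rewrite (ipNl HV) in h2.
  rewrite A1 -/Y in h1. rewrite (ipnN HV) -/Y in h2.
  have h3 := lipn l c.
  have hc' : ipnorm ipV (l - c) < e by rewrite -(ipnN HV) opprB.
  have h5 := ipn_ge0 ipV (l - c).
  have h4 := ipn_ge0 ipW (lam l - lam c).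
  nra.
have parta : forall v : V, exists c d, [/\ C c, orth ipV C d & v = c + d].
  exact: (proj HV Hc C0 CD CZ Ccl).
split => //.
- split; last first.
    move=> x; split; first by case.
    by move=> Cx; split => // y Cy; case: Cx => _ h; apply: h.
  split => //.
  split; first by move=> x _; apply: A1.
    by move=> x y _ _; apply: A2.
  by move=> c y Cc Cy; exists y; split => //; case: Cc => _ h; apply: h.
have O0 : orth ipV C 0 by move=> c _; apply: (ip0l HV).
split.
  split => //.
  - split => //.
    + by move=> x y ox oy c Cc; rewrite (ipDl HV) ox // oy // addr0.
    + by move=> a x ox c Cc; rewrite (ipZl HV) ox // mulr0.
  - split; first by move=> x _; apply: A1.
      by move=> x y _ _; apply: A2.
    move=> c y oc oy.
    have [x [_ lxy hx]] := A3' c y I I.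
    exists x; split => //.
    move=> z Czz; have Cz := proj1 (CC z) Czz.
    by rewrite (ipC HV) Cz lxy -Cz (ipC HV) oy.
move=> x; split; last first.
  move=> ->; split => // y _.
  by rewrite /commute_ftvn (ip0l HV) (lam0 HV HW A1) (ip0l HW).
move=> [ox hcom].
have Cx : C x.
  apply/CC => v.
  have [c [d [Cc od ->]]] := parta v.
  have Cc' := Cc; move/CC: Cc' => Cnc.
  rewrite (lamD HV HW A1 A2 (Cnc d)) (ipDr HV) (ipDr HW).
  have -> : ipV x c = 0 by apply: ox.
  have -> : ipW (lam x) (lam c) = 0 by rewrite (ipC HW) -Cnc (ipC HV); apply: ox.
  rewrite !add0r.
  by apply: hcom.
apply: (ip_eq0 HV); exact: ox.
Qed.
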